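(* Let $\mathcal{I}$ be a hereditary weak P-ideal and $\mathcal{J}$ any ideal. Then $\mathcal{J}\preceq\mathcal{I}$ if and only if $\mathcal{J}\leq_K\mathcal{I}$.
   Context: An ideal on an infinite countable set $X$ is a family $\mathcal{I}\subseteq\mathcal{P}(X)$ closed under subsets and finite unions, containing all finite subsets, with $X\notin\mathcal{I}$. $\mathcal{I}|A=\{B\cap A:B\in\mathcal{I}\}$. $\mathcal{J}\leq_K\mathcal{I}$: there is a function $f:\bigcup\mathcal{I}\to\bigcup\mathcal{J}$ with $f^{-1}[B]\in\mathcal{I}$ for all $B\in\mathcal{J}$. $\mathrm{Fin}^2$: ideal on $\omega^2$ of all $A$ with only finitely many $n$ such that $\{m:(n,m)\in A\}$ is infinite. $\mathcal{I}\sqsubseteq\mathcal{J}$: there is a bijection $f:\bigcup\mathcal{J}\to\bigcup\mathcal{I}$ with $f^{-1}[A]\in\mathcal{J}$ for all $A\in\mathcal{I}$. $\mathcal{I}$ is a hereditary weak P-ideal if $\mathrm{Fin}^2\not\sqsubseteq\mathcal{I}|A$ for every $A\notin\mathcal{I}$. $\mathrm{Fin}\otimes\emptyset$: the family of $A\subseteq\omega^2$ with $A\subseteq F\times\omega$ for some finite $F$. If $(G_{i,j})_{(i,j)\in\omega^2}$ is a partition of $\bigcup\mathcal{I}$ (pieces may be empty) into sets from $\mathcal{I}$, then $\hat{\mathcal{I}}(G_{i,j})$ is the ideal on $\omega^2$ of all $A\subseteq\omega^2$ such that every $X\subseteq\bigcup_{(i,j)\in A}G_{i,j}$ with $X\cap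 G_{i,j}$ finite for all $(i,j)\in A$ belongs to $\mathcal{I}$. $\mathcal{J}\preceq\mathcal{I}$ means: for every partition $(H_{i,j})\subseteq\mathcal{J}$ of $\bigcup\mathcal{J}$ with $\mathrm{Fin}\otimes\emptyset\subseteq\hat{\mathcal{J}}(H_{i,j})$ there is a partition $(G_{i,j})\subseteq\mathcal{I}$ of $\bigcup\mathcal{I}$ with $\hat{\mathcal{J}}(H_{i,j})\cap\mathrm{Fin}^2\subseteq\hat{\mathcal{I}}(G_{i,j})$. *)

(* Defs.v *)
From Stdlib Require Import List.

Definition subset {T : Type} (A B : T -> Prop) : Prop := forall x, A x -> B x.

Definition finite_set {T : Type} (A : T -> Prop) : Prop :=
  exists l : list T, forall x, A x -> In x l.

Definition countable_type (T : Type) : Prop :=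
  exists f : T -> nat, forall x y, f x = f y -> x = y.

Definition infinite_type (T : Type) : Prop :=
  exists f : nat -> T, forall n m, f n = f m -> n = m.

Definition is_ideal {T : Type} (I : (T -> Prop) -> Prop) : Prop :=
  (forall A B : T -> Prop, subset A B -> I B -> I A) /\
  (forall A B : T -> Prop, I A -> I B -> I (fun x => A x \/ B x)) /\
  (forall A : T -> Prop, finite_set A -> I A) /\
  ~ I (fun _ => True).

Definition restrict {T : Type} (I : (T -> Prop) -> Prop) (A : T -> Prop)
  : (T -> Prop) -> Prop :=
  fun C => exists B, I B /\ (forall x, C x <-> (B x /\ A x)).

Definition Fin2 (A : nat * nat -> Prop) : Prop :=
  finite_set (fun n => ~ finite_set (fun m => A (n, m))).

Definition Fin_x_empty (A : nat * nat -> Prop) : Prop :=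
  exists F : nat -> Prop, finite_set F /\ forall n m, A (n, m) -> F n.

(* Fin^2 ⊑ K, where K is a family of subsets of T with ⋃K = D:
   there is a bijection f : D -> omega^2 such that f^{-1}[B] ∈ K for B ∈ Fin^2. *)
Definition Fin2_sqsub_on {T : Type} (K : (T -> Prop) -> Prop) (D : T -> Prop)
  : Prop :=
  exists f : T -> nat * nat,
    (forall x y, D x -> D y -> f x = f y -> x = y) /\
    (forall p, exists x, D x /\ f x = p) /\
    (forall B, Fin2 B -> K (fun x => D x /\ B (f x))).

(* hereditary weak P-ideal: Fin^2 ⋢ I|A for every A ∉ I (note ⋃(I|A) = A). *)
Definition hereditary_weak_P {T : Type} (I : (T -> Prop) -> Prop) : Prop :=
  forall A : T -> Prop, ~ I A -> ~ Fin2_sqsub_on (restrict I A) A.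

Definition katetov_le {X Y : Type} (J : (Y -> Prop) -> Prop)
  (I : (X -> Prop) -> Prop) : Prop :=
  exists f : X -> Y, forall B, J B -> I (fun x => B (f x)).

(* (G_{i,j}) is a partition of T (pieces may be empty) into sets from I *)
Definition ideal_partition {T : Type} (I : (T -> Prop) -> Prop)
  (G : nat * nat -> T -> Prop) : Prop :=
  (forall p q x, G p x -> G q x -> p = q) /\
  (forall x, exists p, G p x) /\
  (forall p, I (G p)).

Definition hat {T : Type} (I : (T -> Prop) -> Prop) (G : nat * nat -> T -> Prop)
  (A : nat * nat -> Prop) : Prop :=
  forall Z : T -> Prop,
    (forall x, Z x -> exists p, A p /\ G p x) ->
    (forall p, A p -> finite_set (fun x => Z x /\ G p x)) ->
    I Z.

Definition preceq {X Y : Type} (J : (Y -> Prop) -> Prop)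
  (I : (X -> Prop) -> Prop) : Prop :=
  forall H : nat * nat -> Y -> Prop,
    ideal_partition J H ->
    (forall A, Fin_x_empty A -> hat J H A) ->
    exists G : nat * nat -> X -> Prop,
      ideal_partition I G /\
      (forall A, hat J H A -> Fin2 A -> hat I G A).

(* Main.v *)
Require Import Defs.
From Stdlib Require Import List Arith Lia Classical ClassicalEpsilon Cantor.

Section Gen.
Context {X : Type}.

Lemma ideal_sub (I : (X -> Prop) -> Prop) : is_ideal I ->
  forall A B, I B -> (forall x, A x -> B x) -> I A.
Proof. intros [h _] A B HB s. exact (h A B s HB). Qed.

Lemma ideal_union (I : (X -> Prop) -> Prop) : is_ideal I ->
  forall A B C, I A -> I B -> (forall x, C x -> A x \/ B x) -> I C.
Proof. intros hI A B C hA hB s. destruct hI as [h [u _]].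
  apply (h C (fun x => A x \/ B x)); [exact s| apply u; auto]. Qed.

Lemma ideal_fin (I : (X -> Prop) -> Prop) : is_ideal I ->
  forall A, finite_set A -> I A.
Proof. intros [_ [_ [f _]]]; auto. Qed.

Lemma ideal_list (I : (X -> Prop) -> Prop) : is_ideal I ->
  forall (D : nat -> X -> Prop), (forall k, I (D k)) ->
  forall F : list nat, I (fun x => exists k, In k F /\ D k x).
Proof.
  intros hI D hD F; induction F as [|a F IH].
  - apply (ideal_fin I hI). exists nil. intros x [k [[] _]].
  - apply (ideal_union I hI (D a) _ _ (hD a) IH).
    intros x [k [[<-|h] d]]; [left; auto | right; eauto].
Qed.

Lemma fin_sub (A B : X -> Prop) : finite_set B -> (forall x, A x -> B x) -> finite_set A.
Proof. intros [l h] s. exists l. auto. Qed.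

Lemma fin_preimage {Z : Type} (P : X -> Prop) (c : X -> Z) :
  (forall x y, P x -> P y -> c x = c y -> x = y) ->
  forall l, finite_set (fun x => P x /\ In (c x) l).
Proof.
  intros hc l; induction l as [|a l [l' IH]].
  - exists nil. intros x [_ []].
  - destruct (classic (exists x, P x /\ c x = a)) as [[x0 [p0 e0]]|nx].
    + exists (x0 :: l'). intros x [px [e|i]].
      * left. apply hc; congruence.
      * right. auto.
    + exists l'. intros x [px [e|i]].
      * exfalso. apply nx. eauto.
      * auto.
Qed.

End Gen.

Definition isb (P : Prop) : nat := if excluded_middle_informative P then 1 else 0.
Fixpoint cnt (S : nat -> Prop) (N : nat) : nat :=
  match N with 0 => 0 | Datatypes.S N' => cnt S N' + isb (S N') end.

Lemma cnt_mono S a b : a <= b -> cnt S a <= cnt S b.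
Proof. induction 1; simpl; [lia|]. unfold isb in *; destruct excluded_middle_informative; lia. Qed.

Lemma cnt_strict S a b : S a -> a < b -> cnt S a < cnt S b.
Proof. intros h l. assert (cnt S (Datatypes.S a) <= cnt S b) by (apply cnt_mono; lia).
  simpl in H. unfold isb in H. destruct excluded_middle_informative; [lia|contradiction]. Qed.

Lemma cnt_inj S a b : S a -> S b -> cnt S a = cnt S b -> a = b.
Proof. intros ha hb e. destruct (lt_eq_lt_dec a b) as [[l|l]|l]; auto.
  - pose proof (cnt_strict S a b ha l); lia.
  - pose proof (cnt_strict S b a hb l); lia. Qed.

Lemma cnt_unb S : ~ finite_set S -> forall m, exists N, m < cnt S N.
Proof.
  intros nf. assert (ab : forall N, exists n, N <= n /\ S n).
  { intros N. apply NNPP; intro h. apply nf. exists (seq 0 N). intros x sx.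
    apply in_seq. split; [lia|]. destruct (le_lt_dec N x); [|lia].
    exfalso; apply h; eauto. }
  induction m as [|m [N hN]].
  - destruct (ab 0) as [n [_ sn]]. exists (Datatypes.S n). simpl.
    unfold isb; destruct excluded_middle_informative; [lia|contradiction].
  - destruct (ab N) as [n [ln sn]]. exists (Datatypes.S n). simpl.
    pose proof (cnt_mono S N n ln).
    unfold isb; destruct excluded_middle_informative; [lia|contradiction].
Qed.

Lemma cnt_hit S : forall N m, m < cnt S N -> exists n, S n /\ cnt S n = m.
Proof.
  induction N; simpl; intros m h; [lia|].
  destruct (le_lt_dec (cnt S N) m) as [l|l]; [|auto].
  unfold isb in h; destruct excluded_middle_informative; [|lia].
  exists N; split; auto; lia.
Qed.

Definition enum (S : nat -> Prop) (j : nat) : nat :=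
  epsilon (inhabits 0) (fun n => S n /\ cnt S n = j).

Lemma enum_spec S : ~ finite_set S -> forall j, S (enum S j) /\ cnt S (enum S j) = j.
Proof. intros nf j. unfold enum. apply epsilon_spec.
  destruct (cnt_unb S nf j) as [N h]. exact (cnt_hit S N j h). Qed.

Lemma enum_inj S : ~ finite_set S -> forall i j, enum S i = enum S j -> i = j.
Proof. intros nf i j e. destruct (enum_spec S nf i) as [_ a]. destruct (enum_spec S nf j) as [_ b].
  congruence. Qed.

Lemma enum_surj S : ~ finite_set S -> forall n, S n -> enum S (cnt S n) = n.
Proof. intros nf n sn. destruct (enum_spec S nf (cnt S n)) as [a b]. apply cnt_inj with S; auto. Qed.

Lemma core {X : Type} (I : (X -> Prop) -> Prop) :
  is_ideal I -> countable_type X -> hereditary_weak_P I ->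
  forall (C : X -> Prop) (D : nat -> X -> Prop),
  (forall k x, D k x -> C x) ->
  (forall k k' x, D k x -> D k' x -> k = k') ->
  (forall x, C x -> exists k, D k x) ->
  (forall k, ~ finite_set (D k)) ->
  (forall k, I (D k)) ->
  (forall W, (forall x, W x -> C x) -> (forall k, finite_set (fun x => W x /\ D k x)) -> I W) ->
  I C.
Proof.
  intros hI [c hc] hwp C D DC Ddis Dcov Dinf DI Dsel.
  apply NNPP; intro nC. apply (hwp C nC).
  set (Sk := fun k n => exists x, D k x /\ c x = n).
  assert (Sinf : forall k, ~ finite_set (Sk k)).
  { intros k [l hl]. apply (Dinf k).
    destruct (fin_preimage (fun _ => True) c (fun x y _ _ e => hc x y e) l) as [l' h'].
    exists l'. intros x dx. apply h'. split; auto. apply hl. exists x; auto. }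
  set (kx := fun x => epsilon (inhabits 0) (fun k => D k x)).
  assert (kxs : forall x, C x -> D (kx x) x).
  { intros x cx. unfold kx. apply epsilon_spec. auto. }
  set (phi := fun x => (kx x, cnt (Sk (kx x)) (c x))).
  assert (phinj : forall x y, C x -> C y -> phi x = phi y -> x = y).
  { intros x y cx cy e. unfold phi in e. injection e as e1 e2.
    apply hc. rewrite e1 in e2. apply cnt_inj with (Sk (kx y)); auto.
    - exists x. split; auto. rewrite <- e1. auto.
    - exists y. auto. }
  exists phi. split; [exact phinj|split].
  - intros [k m]. destruct (enum_spec (Sk k) (Sinf k) m) as [[x [dx ex]] e2].
    exists x. split; [eauto|]. unfold phi.
    assert (kx x = k) by (apply (Ddis _ _ x); auto; apply kxs; eauto).
    rewrite H, ex, e2. reflexivity.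
  - intros B [F hF]. exists (fun x => C x /\ B (phi x)). split; [|tauto].
    apply (ideal_union I hI (fun x => exists k, In k F /\ D k x)
             (fun x => C x /\ B (phi x) /\ ~ In (fst (phi x)) F)).
    + apply ideal_list; auto.
    + apply Dsel; [tauto|]. intros k.
      destruct (classic (In k F)) as [iF|niF].
      * exists nil. intros x [[cx [_ n]] dx]. apply n.
        simpl. rewrite (Ddis _ _ x (kxs x cx) dx). auto.
      * assert (fr : finite_set (fun m => B (k, m))).
        { apply NNPP; intro h. apply niF, hF, h. }
        destruct fr as [L hL].
        destruct (fin_preimage C phi phinj (map (pair k) L)) as [l hl].
        exists l. intros x [[cx [bx _]] dx]. apply hl. split; auto.
        assert (e : kx x = k) by (apply (Ddis _ _ x); auto).
        unfold phi in *. rewrite e in *. apply in_map. apply hL. auto.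
    + intros x [cx bx]. destruct (classic (In (fst (phi x)) F)) as [i|ni].
      * left. exists (fst (phi x)). split; auto. apply kxs; auto.
      * right. auto.
Qed.

Lemma core2 {X : Type} (I : (X -> Prop) -> Prop) :
  is_ideal I -> countable_type X -> hereditary_weak_P I ->
  forall (C : X -> Prop) (D : nat -> X -> Prop),
  (forall k x, D k x -> C x) ->
  (forall k k' x, D k x -> D k' x -> k = k') ->
  (forall x, C x -> exists k, D k x) ->
  (forall k, I (D k)) ->
  (forall W, (forall x, W x -> C x) -> (forall k, finite_set (fun x => W x /\ D k x)) -> I W) ->
  I C.
Proof.
  intros hI cX hwp C D DC Ddis Dcov DI Dsel.
  set (K := fun k => ~ finite_set (D k)).
  set (W := fun x => C x /\ forall k, D k x -> ~ K k).
  assert (WI : I W).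
  { apply Dsel; [unfold W; tauto|]. intros k.
    destruct (classic (K k)) as [kk|nk].
    - exists nil. intros x [[_ h] d]. exact (h k d kk).
    - apply NNPP in nk. apply (fin_sub _ _ nk). tauto. }
  destruct (classic (finite_set K)) as [[L hL]|nK].
  - apply (ideal_union I hI (fun x => exists k, In k L /\ D k x) W).
    + apply ideal_list; auto.
    + exact WI.
    + intros x cx. destruct (Dcov x cx) as [k dk].
      destruct (classic (K k)) as [kk|nk].
      * left. exists k. auto.
      * right. split; auto. intros k' d'. rewrite (Ddis _ _ _ d' dk). auto.
  - set (kap := enum K).
    set (E := fun j x => D (kap j) x \/ (j = 0 /\ W x)).
    assert (Kk : forall j, K (kap j)) by (intro j; apply (enum_spec K nK j)).
    apply (core I hI cX hwp C E).
    + intros j x [d|[_ [cx _]]]; eauto.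
    + intros j j' x [d|[e w]] [d'|[e' w']].
      * apply (enum_inj K nK). apply (Ddis _ _ x); auto.
      * exfalso. destruct w' as [_ h]. exact (h _ d (Kk j)).
      * exfalso. destruct w as [_ h]. exact (h _ d' (Kk j')).
      * congruence.
    + intros x cx. destruct (Dcov x cx) as [k dk].
      destruct (classic (K k)) as [kk|nk].
      * exists (cnt K k). left. unfold kap. rewrite enum_surj; auto.
      * exists 0. right. split; auto. split; auto. intros k' d'. rewrite (Ddis _ _ _ d' dk). auto.
    + intros j fj. apply (Kk j). apply (fin_sub _ _ fj). unfold E; tauto.
    + intros j. apply (ideal_union I hI (D (kap j)) W); auto. unfold E; tauto.
    + intros V VC hV. apply Dsel; auto. intros k.
      destruct (classic (K k)) as [kk|nk].
      * apply (fin_sub _ _ (hV (cnt K k))). intros x [v d]. split; auto. left.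
        unfold kap. rewrite enum_surj; auto.
      * apply NNPP in nk. apply (fin_sub _ _ nk). tauto.
Qed.

Section Hat.
Context {X : Type} (I : (X -> Prop) -> Prop) (G : nat * nat -> X -> Prop)
  (hI : is_ideal I) (cX : countable_type X) (hwp : hereditary_weak_P I)
  (hG : ideal_partition I G).

Lemma lemU : forall A, hat I G A -> I (fun x => exists p, A p /\ G p x).
Proof.
  destruct hG as [Gd [Gc GI]]. intros A hA.
  apply (core2 I hI cX hwp _ (fun k x => A (of_nat k) /\ G (of_nat k) x)).
  - intros k x [a g]; eauto.
  - intros k k' x [_ g] [_ g']. rewrite <- (cancel_to_of k), <- (cancel_to_of k').
    f_equal. eapply Gd; eauto.
  - intros x [p [a g]]. exists (to_nat p). rewrite cancel_of_to. auto.
  - intros k. apply (ideal_sub I hI _ (G (of_nat k))); [apply GI|tauto].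
  - intros W WC hW. apply hA; auto. intros p a.
    apply (fin_sub _ _ (hW (to_nat p))). rewrite cancel_of_to. tauto.
Qed.

Lemma lemV : forall A, (forall A', (forall p, A' p -> A p) -> Fin2 A' -> hat I G A') ->
  I (fun x => exists p, A p /\ G p x).
Proof.
  pose proof hG as [Gd [Gc GI]]. intros A hA.
  apply (core2 I hI cX hwp _ (fun n x => exists m, A (n, m) /\ G (n, m) x)).
  - intros k x [m [a g]]; eauto.
  - intros k k' x [m [_ g]] [m' [_ g']]. pose proof (Gd _ _ _ g g'). congruence.
  - intros x [[n m] [a g]]. eauto.
  - intros n. apply (ideal_sub I hI _ (fun x => exists p, (fst p = n /\ A p) /\ G p x)).
    + apply lemU. apply hA; [tauto|]. exists (n :: nil). intros k nk. left.
      apply NNPP; intro ne. apply nk. exists nil. intros m [e _]. simpl in e. congruence.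
    + intros x [m [a g]]. exists (n, m). auto.
  - intros W WC hW.
    set (AW := fun p => A p /\ exists x, W x /\ G p x).
    assert (hAW : hat I G AW).
    { apply hA; [unfold AW; tauto|]. exists nil. intros n nf. exfalso. apply nf.
      destruct (hW n) as [l hl].
      assert (fl : forall l : list X, exists lm, forall m, (exists x, In x l /\ G (n, m) x) -> In m lm).
      { intros l0; induction l0 as [|x l0 [lm IH]].
        - exists nil. intros m [x [[] _]].
        - destruct (classic (exists m0, G (n, m0) x)) as [[m0 g0]|ng].
          + exists (m0 :: lm). intros m [y [[<-|i] g]].
            * left. pose proof (Gd _ _ _ g0 g). congruence.
            * right. eauto.
          + exists lm. intros m [y [[<-|i] g]].
            * exfalso; eauto.
            * eauto. }
      destruct (fl l) as [lm hlm]. exists lm. intros m [a [x [w g]]].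
      apply hlm. exists x. split; auto. apply hl. split; auto. exists m; auto. }
    apply (ideal_sub I hI _ (fun x => exists p, AW p /\ G p x)).
    + apply lemU. exact hAW.
    + intros x w. destruct (WC x w) as [[n m] [a g]]. exists (n, m).
      split; auto. split; auto. eauto.
Qed.
End Hat.

Theorem proposition8p5 (X Y : Type)
  (I : (X -> Prop) -> Prop) (J : (Y -> Prop) -> Prop) :
  countable_type X -> infinite_type X ->
  countable_type Y -> infinite_type Y ->
  is_ideal I -> is_ideal J ->
  hereditary_weak_P I ->
  (preceq J I <-> katetov_le J I).
Proof.
  intros cX iX cY iY hI hJ hwp. split.
  - intros hp. destruct cY as [c hc]. destruct iY as [e _]. pose (y0 := e 0).
    set (H := fun (p : nat * nat) y => snd p = 0 /\ c y = fst p).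
    assert (Hone : forall p y y', H p y -> H p y' -> y = y').
    { intros p y y' [_ a] [_ b]. apply hc. congruence. }
    assert (hH : ideal_partition J H).
    { split; [|split].
      - intros [a b] [a' b'] y [h1 h2] [h3 h4]. simpl in *. congruence.
      - intros y. exists (c y, 0). split; reflexivity.
      - intros p. apply (ideal_fin J hJ).
        destruct (classic (exists y, H p y)) as [[y hy]|n].
        + exists (y :: nil). intros y' h'. left. eauto.
        + exists nil. intros y' h'. exfalso; eauto. }
    assert (hF : forall A, Fin_x_empty A -> hat J H A).
    { intros A [F [[l hl] hA]] Z hZ _. apply (ideal_fin J hJ).
      destruct (fin_preimage (fun _ => True) c (fun x y _ _ e => hc x y e) l) as [l' h'].
      exists l'. intros y z. apply h'. split; auto. apply hl.
      destruct (hZ y z) as [[n m] [a [_ e']]]. simpl in e'. rewrite e'. eapply hA; eauto. }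
    destruct (hp H hH hF) as [G [hG hGH]].
    pose proof hG as [Gd [Gc GI]].
    exists (fun x => epsilon (inhabits y0) (fun y => exists p, G p x /\ H p y)).
    intros B hB.
    set (A := fun p => forall y, H p y -> B y).
    apply (ideal_sub I hI _ (fun x => exists p, A p /\ G p x)).
    + apply (lemV I G hI cX hwp hG). intros A' sA fA. apply hGH; auto.
      intros Z hZ _. apply (ideal_sub J hJ _ B hB). intros y z.
      destruct (hZ y z) as [p [a h]]. apply (sA p a y h).
    + intros x bx. destruct (Gc x) as [p g]. exists p. split; auto.
      intros y h.
      assert (ex : exists y', exists p, G p x /\ H p y') by eauto.
      pose proof (epsilon_spec (inhabits y0) _ ex) as [p' [g' h']].
      rewrite (Gd _ _ _ g g') in h. rewrite (Hone _ _ _ h h'). exact bx.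
  - intros [f hf] H [Hd [Hc HJ]] _.
    exists (fun p x => H p (f x)). split; [split; [|split]|].
    + intros p q x; apply Hd.
    + intros x; apply Hc.
    + intros p. apply hf, HJ.
    + intros A hA _ Z hZ hfin.
      apply (ideal_sub I hI _ (fun x => (fun y => exists x', Z x' /\ f x' = y) (f x))).
      * apply (hf (fun y => exists x', Z x' /\ f x' = y)). apply hA.
        -- intros y [x' [z <-]]. apply hZ, z.
        -- intros p a. destruct (hfin p a) as [l hl]. exists (map f l).
           intros y [[x' [z <-]] h]. apply in_map. apply hl. auto.
      * intros x z. exists x. auto.
Qed.
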